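(* For $n=2$ the representation $\theta:FVB_2\to{\rm Aut}(F_4)$ is faithful.
   Context: $FVB_2$ is the group $\langle\sigma_1,\rho_1\mid \sigma_1^2=\rho_1^2=1\rangle$. $F_4$ is free on $x_1,x_2,y_1,y_2$, and $\theta$ is the homomorphism determined by $\theta(\sigma_1):x_1\mapsto x_2y_2,\ x_2\mapsto x_1y_2^{-1},\ y_1\mapsto y_1,\ y_2\mapsto y_2$ and $\theta(\rho_1):x_1\mapsto x_2,\ x_2\mapsto x_1,\ y_1\mapsto y_2,\ y_2\mapsto y_1$. Automorphisms are composed on the right: $(fg)(x)=g(f(x))$. *)

(* Defs.v *)
From mathcomp Require Import all_boot.
Set Implicit Arguments. Unset Strict Implicit. Unset Printing Implicit Defensive.

(* Generators are indexed by 'I_4: 0 = x1, 1 = x2, 2 = y1, 3 = y2.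
   A letter (i, true) is the generator i, (i, false) its inverse.
   Elements of F_4 are represented by words; two words denote the same
   element of F_4 iff they have the same free reduction [freduce]. *)
Definition letter := ('I_4 * bool)%type.

Definition inv_letter (a : letter) : letter := (a.1, ~~ a.2).

Definition freduce (w : seq letter) : seq letter :=
  foldr (fun a s => match s with
                    | b :: s' => if b == inv_letter a then s' else a :: s
                    | [::] => [:: a]
                    end) [::] w.

Definition finv (w : seq letter) : seq letter := rev (map inv_letter w).

Definition fsubst (f : 'I_4 -> seq letter) (w : seq letter) : seq letter :=
  freduce (flatten (map (fun a : letter => if a.2 then f a.1 else finv (f a.1)) w)).

Definition gx1 : 'I_4 := @Ordinal 4 0 isT.
Definition gx2 : 'I_4 := @Ordinal 4 1 isT.
Definition gy1 : 'I_4 := @Ordinal 4 2 isT.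
Definition gy2 : 'I_4 := @Ordinal 4 3 isT.

(* Words in the generators: true = sigma_1, false = rho_1 (both involutions,
   so no inverse letters are needed). *)
Definition fvb_word := seq bool.

(* equality in FVB_2: the equivalence relation on words generated by
   deleting a subword  s s  (s = sigma_1 or rho_1), i.e. the relations
   sigma_1^2 = rho_1^2 = 1 of the presentation *)
Inductive fvb_eq : fvb_word -> fvb_word -> Prop :=
| fvb_refl u : fvb_eq u u
| fvb_sym u v : fvb_eq u v -> fvb_eq v u
| fvb_trans u v w : fvb_eq u v -> fvb_eq v w -> fvb_eq u w
| fvb_cancel u v (s : bool) : fvb_eq (u ++ s :: s :: v) (u ++ v).

Definition theta_gen (s : bool) (i : 'I_4) : seq letter :=
  if s then
    match val i with
    | 0 => [:: (gx2, true); (gy2, true)]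
    | 1 => [:: (gx1, true); (gy2, false)]
    | _ => [:: (i, true)]
    end
  else
    match val i with
    | 0 => [:: (gx2, true)]
    | 1 => [:: (gx1, true)]
    | 2 => [:: (gy2, true)]
    | _ => [:: (gy1, true)]
    end.

(* theta extended to words; automorphisms are composed on the right,
   (fg)(x) = g(f(x)), so for w = s_1 s_2 ... s_k,
   theta(w)(x) = theta(s_k)( ... theta(s_1)(x) ...). *)
Definition theta_word (w : fvb_word) (x : seq letter) : seq letter :=
  foldl (fun y s => fsubst (theta_gen s) y) (freduce x) w.

(* Main.v *)
From Stdlib Require Import ZArith Lia.
Require Import Defs.
From mathcomp Require Import all_boot.

Set Implicit Arguments. Unset Strict Implicit. Unset Printing Implicit Defensive.

Definition wt (f : 'I_4 -> Z) (a : letter) : Z := if a.2 then f a.1 else (- f a.1)%Z.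
Definition sumw (f : 'I_4 -> Z) (w : seq letter) : Z :=
  foldr (fun a acc => (wt f a + acc)%Z) 0%Z w.

Lemma sumw_cat f s t : sumw f (s ++ t) = (sumw f s + sumw f t)%Z.
Proof. elim: s => [|a s IH] /=; [lia| rewrite IH; lia]. Qed.

Lemma sumw_rev f s : sumw f (rev s) = sumw f s.
Proof.
elim: s => [|a s IH] //=. rewrite rev_cons -cats1 sumw_cat IH /=. lia.
Qed.

Lemma wt_inv f a : wt f (inv_letter a) = (- wt f a)%Z.
Proof. case: a => i [] /=; rewrite /wt /=; lia. Qed.

Lemma sumw_finv f s : sumw f (Defs.finv s) = (- sumw f s)%Z.
Proof.
rewrite /Defs.finv sumw_rev. elim: s => [|a s IH] //=. rewrite IH wt_inv. lia.
Qed.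

Lemma sumw_freduce f w : sumw f (freduce w) = sumw f w.
Proof.
elim: w => [|a w IH] //=. rewrite -IH.
case: (freduce w) => [|b s] //=.
case: eqP => [->|_] //=. rewrite wt_inv. lia.
Qed.

Lemma sumw_fsubst f g w :
  sumw f (fsubst g w) =
  foldr (fun a acc => ((if a.2 then sumw f (g a.1) else - sumw f (g a.1)) + acc)%Z) 0%Z w.
Proof.
rewrite /fsubst sumw_freduce. elim: w => [|a w IH] //=.
rewrite sumw_cat IH. case: a.2; rewrite ?sumw_finv; lia.
Qed.

Definition fphi (i : 'I_4) : Z :=
  match val i with 0 => 1%Z | 1 => (-1)%Z | _ => 0%Z end.
Definition fpsi (i : 'I_4) : Z :=
  match val i with 0 => 0%Z | 1 => 0%Z | _ => 1%Z end.

Lemma gen_phi s i : sumw fphi (theta_gen s i) = (- fphi i)%Z.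
Proof.
case: i => [[|[|[|[|n]]]] Hi] //; case: s => //.
Qed.

Lemma gen_psi s i : sumw fpsi (theta_gen s i) = (fpsi i + if s then fphi i else 0)%Z.
Proof.
case: i => [[|[|[|[|n]]]] Hi] //; case: s => //.
Qed.

Lemma phi_step s w : sumw fphi (fsubst (theta_gen s) w) = (- sumw fphi w)%Z.
Proof.
rewrite sumw_fsubst. elim: w => [|a w IH] //=. rewrite IH gen_phi /wt.
case: a.2; lia.
Qed.

Lemma psi_step s w : sumw fpsi (fsubst (theta_gen s) w) =
   (sumw fpsi w + if s then sumw fphi w else 0)%Z.
Proof.
rewrite sumw_fsubst. elim: w => [|a w IH] /=; first by case: s. rewrite IH gen_psi /wt.
case: s IH => IH; case: a.2; lia.
Qed.

Definition step (s : bool) (z : Z * Z) : Z * Z :=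
  ((- z.1)%Z, (z.2 + if s then z.1 else 0)%Z).
Definition st (u : seq bool) (z : Z * Z) := foldl (fun z s => step s z) z u.

Lemma st_theta u y :
  (sumw fphi (foldl (fun y s => fsubst (theta_gen s) y) y u),
   sumw fpsi (foldl (fun y s => fsubst (theta_gen s) y) y u)) =
  st u (sumw fphi y, sumw fpsi y).
Proof.
elim: u y => [|s u IH] y //=. rewrite IH phi_step psi_step //.
Qed.

Lemma step_inv s z : step s (step s z) = z.
Proof. case: z => p t; rewrite /step /=; f_equal; case: s; lia. Qed.

Lemma st_eq : forall u v, fvb_eq u v -> forall z, st u z = st v z.
Proof.
move=> u0 v0; elim.
- by [].
- by move=> u v H IH z; rewrite IH.
- by move=> u v w H1 IH1 H2 IH2 z; rewrite IH1 IH2.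
- move=> u v s z. rewrite /st !foldl_cat /=. by rewrite step_inv.
Qed.

Lemma fvb_cons s : forall u v, fvb_eq u v -> fvb_eq (s :: u) (s :: v).
Proof.
move=> u0 v0; elim.
- by move=> u; apply: fvb_refl.
- by move=> u v H IH; apply: fvb_sym.
- by move=> u v w H1 IH1 H2 IH2; apply: fvb_trans IH2.
- by move=> u v t; apply: (fvb_cancel (s :: u) v t).
Qed.

Fixpoint r (w : seq bool) : seq bool :=
  match w with
  | [::] => [::]
  | s :: w' => match r w' with
               | t :: w'' => if t == s then w'' else s :: t :: w''
               | [::] => [:: s]
               end
  end.

Fixpoint altok (w : seq bool) : bool :=
  match w with
  | a :: ((b :: _) as w') => (a != b) && altok w'
  | _ => true
  end.

Lemma altok_tail a w : altok (a :: w) -> altok w.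
Proof. case: w => //= b w /andP[]. by []. Qed.

Lemma altok_r w : altok (r w).
Proof.
elim: w => [|s w IH] //=. move: IH. case: (r w) => [|t w''] // IH.
case: eqP => [_|ne]. exact: altok_tail IH.
rewrite /=. apply/andP; split => //. by apply/eqP => E; apply: ne.
Qed.

Lemma fvb_r w : fvb_eq w (r w).
Proof.
elim: w => [|s w IH] /=; first exact: fvb_refl.
apply: fvb_trans (fvb_cons s IH) _.
case: (r w) => [|t w'']; first exact: fvb_refl.
case: eqP => [->|_]; last exact: fvb_refl.
exact: (fvb_cancel [::] w'' s).
Qed.

Fixpoint alt (s : bool) (n : nat) : seq bool :=
  match n with 0 => [::] | n'.+1 => s :: alt (~~ s) n' end.

Lemma alt_form w : altok w -> w = alt (head true w) (size w).
Proof.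
elim: w => [|a w IH] //= H. have := IH (altok_tail H).
move: H; case: w {IH} => [|b w] //= /andP[ab _] ->.
by case: a b ab => [] [].
Qed.

Fixpoint c (s : bool) (n : nat) : Z :=
  match n with 0 => 0%Z | n'.+1 => ((if s then 1 else 0) - c (~~ s) n')%Z end.

Lemma st_alt s n p t :
  st (alt s n) (p, t) = ((if odd n then - p else p)%Z, (t + p * c s n)%Z).
Proof.
elim: n s p t => [|n IH] s p t /=. f_equal; lia.
rewrite /st /= -/(st _ _). rewrite /step /= IH.
have Hc1 : c true n.+1 = (1 - c false n)%Z by [].
have Hc2 : c false n.+1 = (0 - c true n)%Z by [].
case: s; rewrite ?Hc1 ?Hc2 /negb; case: (odd n); rewrite /negb; f_equal; ring.
Qed.

Lemma c_form n :
  (2 * c true n = Z.of_nat n + (if odd n then 1 else 0))%Z /\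
  (2 * c false n = - (Z.of_nat n - (if odd n then 1 else 0)))%Z.
Proof.
elim: n => [|n [IH1 IH2]]; first (simpl; lia).
have Hc1 : c true n.+1 = (1 - c false n)%Z by [].
have Hc2 : c false n.+1 = (0 - c true n)%Z by [].
have Ho : odd n.+1 = ~~ odd n by [].
rewrite Hc1 Hc2 Ho.
case: (odd n) IH1 IH2 => IH1 IH2; rewrite /negb; lia.
Qed.

Lemma alt_inj s n s' m :
  st (alt s n) (1%Z, 0%Z) = st (alt s' m) (1%Z, 0%Z) -> alt s n = alt s' m.
Proof.
rewrite !st_alt !Z.add_0_l !Z.mul_1_l => -[E1 E2].
have Hp : odd n = odd m by move: E1; case: (odd n); case: (odd m) => //=; lia.
have [A1 A2] := c_form n. have [B1 B2] := c_form m.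
rewrite -Hp in B1 B2.
have Hnm : s = s' -> n = m.
  move=> Es; subst s'; apply: Nat2Z.inj.
  case: s E2; case: (odd n) A1 A2 B1 B2 => A1 A2 B1 B2 E2; lia.
case: s s' E2 Hnm => [] [] E2 Hnm; try by rewrite (Hnm erefl).
- have : n = 0 /\ m = 0.
    case: (odd n) A1 A2 B1 B2 => A1 A2 B1 B2; split; apply: Nat2Z.inj; lia.
  by case=> -> ->.
- have : n = 0 /\ m = 0.
    case: (odd n) A1 A2 B1 B2 => A1 A2 B1 B2; split; apply: Nat2Z.inj; lia.
  by case=> -> ->.
Qed.

Theorem proposition7 :
  forall u v : fvb_word,
    (forall x : seq letter, theta_word u x = theta_word v x) ->
    fvb_eq u v.
Proof.
move=> u v H.
have E := H [:: (gx1, true)].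
have Est : st u (1%Z, 0%Z) = st v (1%Z, 0%Z).
  have := st_theta u (freduce [:: (gx1, true)]).
  have := st_theta v (freduce [:: (gx1, true)]).
  rewrite /theta_word in E. rewrite E => -> /=.
  by move=> <-.
have Ru := st_eq (fvb_r u) (1%Z, 0%Z).
have Rv := st_eq (fvb_r v) (1%Z, 0%Z).
have Au := alt_form (altok_r u). have Av := alt_form (altok_r v).
have Heq : r u = r v.
  rewrite Au Av; apply: alt_inj; rewrite -Au -Av -Ru -Rv //.
apply: fvb_trans (fvb_r u) _. rewrite Heq. exact: fvb_sym (fvb_r v).
Qed.
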